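(* Let $(X,\mathrm{dist})$ be a metric space and $\Sigma$ a compact metric space. Let $T(h):\Sigma\to\Sigma$, $h\ge0$, be a semigroup with $T(h)\Sigma=\Sigma$ for all $h\ge0$, and let $\{U_\sigma(t,\tau)\}_{\sigma\in\Sigma}$ be a family of processes on $X$ satisfying $U_\sigma(h+t,h+\tau)=U_{T(h)\sigma}(t,\tau)$ for all $\sigma\in\Sigma$, $h\ge0$, $t\ge\tau$. Assume the family is uniformly asymptotically compact (which, when $X$ is complete, is equivalent to being totally uniformly dissipative), and let $A_\Sigma$ be its uniform global attractor. If the family is asymptotically closed with respect to some sequence $h_k$ and $T(h_k)$ is continuous for every $k$, then $A_\Sigma=\bigcup_{\sigma\in\Sigma}\mathcal{K}_\sigma(0)$.
   Context: A process on $X$ is a family of maps $U(t,\tau):X\to X$, indexed by reals $t\ge\tau$, with $U(\tau,\tau)=\mathrm{id}_X$ and $U(t,\tau)=U(t,s)U(s,\tau)$ for $t\ge s\ge\tau$. For nonempty $B,C\subset X$, $\delta_X(B,C)=\sup_{x\in B}\inf_{\xi\in C}\mathrm{dist}(x,\xi)$. A set $K\subset X$ is uniformly attracting if for every bounded $C\subset X$, $\lim_{t-\tau\to\infty}\sup_{\sigma\in\Sigma}\delta_X(U_\sigma(t,\tau)C,K)=0$. The family is uniformly asymptotically compact if there is a compact uniformly attracting set; the uniform global attractor $A_\Sigma$ is the compact uniformly attracting set contained in every compact uniformly attracting set. Total uniform dissipativity: for every $\varepsilon>0$ there is a finite set $M_\varepsilon\subset X$ such that its open $\varepsilon$-neighborhood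 is uniformly absorbing, i.e. for every bounded $C\subset X$ there is $t_e$ with $U_\sigma(t,\tau)C$ contained in it for all $\sigma$ whenever $t-\tau\ge t_e$. The family is asymptotically closed with respect to a (finite with at least two terms, or infinite) sequence $0=h_0<h_1<h_2<\cdots$ if whenever $\sigma_n\to\sigma\in\Sigma$ and $U_{\sigma_n}(h_k,0)x_n\to\xi^k\in X$ as $n\to\infty$ for every $k$, then $U_\sigma(h_k,0)\xi^0=\xi^k$ for every $k$. For $\sigma\in\Sigma$, a complete bounded trajectory of $U_\sigma(t,\tau)$ is a function $x:\mathbb{R}\to X$ with bounded range and $x(s)=U_\sigma(s,\tau)x(\tau)$ for all $s\ge\tau$, $\tau\in\mathbb{R}$; $\mathcal{K}_\sigma(t)=\{x(t): x$ a complete bounded trajectory of $U_\sigma(t,\tau)\}$. *)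

(* Defs.v *)
From HB Require Import structures.
From mathcomp Require Import all_boot all_order all_algebra.
From mathcomp Require Import all_classical all_reals all_analysis.
Set Implicit Arguments. Unset Strict Implicit. Unset Printing Implicit Defensive.
Import Order.TTheory GRing.Theory Num.Theory.
Local Open Scope classical_set_scope.
Local Open Scope ring_scope.

Section Defs.
Variables (R : realType) (X Sigma : metricType R).

(* A family of processes {U_sigma(t,tau)}: U sigma t tau : X -> X.
   Values for t < tau are irrelevant. *)
Definition is_process (U : R -> R -> X -> X) : Prop :=
  (forall tau, U tau tau = id) /\
  (forall t s tau, s <= t -> tau <= s -> U t tau = U t s \o U s tau).

Definition is_semigroup (T : R -> Sigma -> Sigma) : Prop :=
  T 0 = id /\ (forall h1 h2, 0 <= h1 -> 0 <= h2 -> T (h1 + h2) = T h1 \o T h2).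

Definition mbounded (C : set X) : Prop :=
  exists r : R, forall x y, C x -> C y -> mdist x y <= r.

Definition hdelta (B C : set X) : \bar R :=
  ereal_sup [set ereal_inf [set (mdist x xi)%:E | xi in C] | x in B].

Definition unif_attracting (U : Sigma -> R -> R -> X -> X) (K : set X) : Prop :=
  forall C : set X, mbounded C ->
  forall e : R, 0 < e -> exists L : R, forall t tau : R, L <= t - tau ->
    (ereal_sup [set hdelta (U sigma t tau @` C) K | sigma in [set: Sigma]]
       <= e%:E)%E.

Definition unif_asymp_compact (U : Sigma -> R -> R -> X -> X) : Prop :=
  exists K : set X, compact K /\ unif_attracting U K.

Definition is_unif_global_attractor (U : Sigma -> R -> R -> X -> X)
    (A : set X) : Prop :=
  [/\ compact A, unif_attracting U A &
      forall K : set X, compact K -> unif_attracting U K -> A `<=` K].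

Definition admissible_seq (I : set nat) (h : nat -> R) : Prop :=
  ((exists N : nat, (2 <= N)%N /\ I = [set k | (k < N)%N]) \/ I = setT) /\
  h 0%N = 0 /\ (forall k, I k.+1 -> h k < h k.+1).

Definition asymp_closed (U : Sigma -> R -> R -> X -> X) (I : set nat)
    (h : nat -> R) : Prop :=
  forall (sigman : nat -> Sigma) (sigma : Sigma) (xn : nat -> X) (xi : nat -> X),
    sigman @ \oo --> sigma ->
    (forall k, I k -> (fun n => U (sigman n) (h k) 0 (xn n)) @ \oo --> xi k) ->
    forall k, I k -> U sigma (h k) 0 (xi 0%N) = xi k.

Definition complete_bdd_traj (U : Sigma -> R -> R -> X -> X) (sigma : Sigma)
    (x : R -> X) : Prop :=
  mbounded (range x) /\
  (forall s tau : R, tau <= s -> x s = U sigma s tau (x tau)).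

Definition kernel_section (U : Sigma -> R -> R -> X -> X) (sigma : Sigma)
    (t : R) : set X :=
  [set x t | x in complete_bdd_traj U sigma].

End Defs.

(* Main.v *)
Require Import Defs.
From HB Require Import structures.
From mathcomp Require Import all_boot all_order all_algebra.
From mathcomp Require Import all_classical all_reals all_analysis.
From mathcomp Require Import ring lra.
Import Order.TTheory GRing.Theory Num.Theory.
Local Open Scope classical_set_scope.
Local Open Scope ring_scope.

Section Gen.
Variables (R : realType) (Y : metricType R).

Definition freq (p : Y) (z : nat -> Y) :=
  forall e : R, 0 < e -> forall N : nat, exists n, (N <= n)%N /\ mdist p (z n) < e.

Definition incr (f : nat -> nat) := forall a b, (a < b)%N -> (f a < f b)%N.

Lemma incr_ge f : incr f -> forall n, (n <= f n)%N.
Proof.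
move=> hf; elim=> [|n IH] //; apply: leq_ltn_trans IH (hf _ _ _)=> //.
Qed.

Lemma incr_comp f g : incr f -> incr g -> incr (f \o g).
Proof. by move=> hf hg a b ab; apply/hf/hg. Qed.

Lemma cvg_epsP (z : nat -> Y) p :
  z @ \oo --> p <-> forall e : R, 0 < e -> exists N, forall n, (N <= n)%N -> mdist p (z n) < e.
Proof.
rewrite metricType_numDomainType.cvgrPdist_lt; split=> H e e0.
  by have [N _ HN] := H e e0; exists N => n Nn; apply: HN.
by have [N HN] := H e e0; exists N => // n /= Nn; apply: HN.
Qed.

Lemma inv_small (e : R) : 0 < e -> exists N : nat, forall n, (N <= n)%N -> (n.+1%:R)^-1 < e.
Proof.
move=> e0; exists (Num.truncn e^-1) => n Nn.
rewrite -[e]invrK ltf_pV2 ?posrE ?invr_gt0 ?ltr0Sn //.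
apply: (lt_le_trans (truncnS_gt _)); rewrite ler_nat ltnS //.
Qed.

Lemma extract (p : Y) z : freq p z -> exists phi, incr phi /\ (z \o phi) @ \oo --> p.
Proof.
move=> fr.
have : forall Nj : nat * nat, exists n, (Nj.1 <= n)%N /\ mdist p (z n) < (Nj.2.+1%:R)^-1.
  by move=> [N j]; apply: fr; rewrite invr_gt0 ltr0Sn.
move=> /boolp.choice [g Hg].
pose phi := fix phi n := match n with 0 => g (0, 0)%N | m.+1 => g ((phi m).+1, m.+1) end.
have Hs : forall n, (phi n < phi n.+1)%N by move=> n; have [] := Hg ((phi n).+1, n.+1).
exists phi; split.
  move=> a b; apply: (@homo_ltn _ phi (fun a b => (a < b)%N)) => //; exact: ltn_trans.
apply/cvg_epsP => e e0; have [N HN] := inv_small _ e0; exists N => n Nn /=.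
apply: lt_trans (HN _ Nn).
by case: n {Nn} => [|n]; [have [] := Hg (0,0)%N | have [] := Hg ((phi n).+1, n.+1)].
Qed.

Lemma compact_freq (K : set Y) (q : nat -> Y) :
  compact K -> (forall n, K (q n)) -> exists p, K p /\ freq p q.
Proof.
move=> cK Kq.
have [p [Kp clp]] : K `&` cluster (q @ \oo) !=set0.
  apply: cK.
  by exists 0%N => // n _; apply: Kq.
exists p; split => // e e0 N.
have [w [[n /= Nn <-] bw]] := clp (q @` [set n | (N <= n)%N]) [set w | mdist p w < e]
  ltac:(by exists N => // n /= Nn; exists n)
  ltac:(by apply/metricType_numDomainType.nbhs_mdistP; exists e).
by exists n.
Qed.

Lemma approach_freq (K : set Y) (z : nat -> Y) :
  compact K ->
  (forall e : R, 0 < e -> exists N, forall n, (N <= n)%N -> exists xi, K xi /\ mdist (z n) xi < e) ->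
  exists p, K p /\ freq p z.
Proof.
move=> cK ap.
have : forall j : nat, exists Nq : nat * Y, (j <= Nq.1)%N /\ K Nq.2 /\ mdist (z Nq.1) Nq.2 < (j.+1%:R)^-1.
  move=> j; have [N HN] := ap _ (ltac:(by rewrite invr_gt0 ltr0Sn) : 0 < (j.+1%:R : R)^-1).
  have [xi [Kxi dxi]] := HN (maxn N j) (leq_maxl _ _).
  by exists (maxn N j, xi); split => //=; apply: leq_maxr.
move=> /boolp.choice [g Hg].
have [p [Kp fp]] := @compact_freq K _ cK (fun j => proj1 (proj2 (Hg j))).
exists p; split => // e e0 N.
have e20 : 0 < e / 2 by rewrite divr_gt0.
have [M HM] := inv_small _ e20.
have [j [Nj dj]] := fp _ e20 (maxn N M).
exists (g j).1; split.
  apply: leq_trans (proj1 (Hg j)); apply: leq_trans Nj; apply: leq_maxl.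
apply: le_lt_trans (metric_triangle _ (g j).2 _) _.
rewrite [e]splitr ltrD // metric_sym; apply: lt_trans (proj2 (proj2 (Hg j))) _.
by apply: HM; apply: leq_trans Nj; apply: leq_maxr.
Qed.


Lemma diag (F : nat -> nat -> Y) :
  (forall j psi, incr psi -> exists p, freq p (F j \o psi)) ->
  exists phi, incr phi /\ forall j, exists p : Y, (F j \o phi) @ \oo --> p.
Proof.
move=> H.
have : forall jp : nat * (nat -> nat), exists th, incr th /\
    (incr jp.2 -> exists p : Y, (F jp.1 \o jp.2 \o th) @ \oo --> p).
  move=> [j psi] /=; case: (pselect (incr psi)) => h.
    have [p fp] := H j psi h; have [th [ith cth]] := @extract p _ fp.
    by exists th; split => // _; exists p.
  by exists id; split => // a b.
move=> /boolp.choice [ex Hex].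
pose Phi := fix Phi j := match j with 0 => ex (0%N, id) | i.+1 => Phi i \o ex (i.+1, Phi i) end.
have iPhi : forall j, incr (Phi j).
  elim=> [|i IH] /=; first by have [] := Hex (0%N, id).
  by apply: incr_comp => //; have [] := Hex (i.+1, Phi i).
have cPhi : forall j, exists p : Y, (F j \o Phi j) @ \oo --> p.
  case=> [|i] /=; first by have [_ ] := Hex (0%N, id); apply.
  by have [_] := Hex (i.+1, Phi i); apply; apply: iPhi.
have tail : forall i j, (j <= i)%N -> exists chi, incr chi /\ forall n, Phi i n = Phi j (chi n).
  elim=> [|i IH] j ji.
    by move: ji; rewrite leqn0 => /eqP ->; exists id; split.
  move: ji; rewrite leq_eqVlt => /orP [/eqP -> | ji]; first by exists id; split.
  have [chi [ichi echi]] := IH j ji.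
  exists (chi \o ex (i.+1, Phi i)); split.
    by apply: incr_comp => //; have [] := Hex (i.+1, Phi i).
  by move=> n /=; rewrite echi.
exists (fun n => Phi n n); split.
  move=> a b; apply: (@homo_ltn _ (fun n => Phi n n) (fun a b => (a < b)%N)).
    exact: ltn_trans.
  move=> n /=; apply: iPhi.
  by apply: incr_ge; have [] := Hex (n.+1, Phi n).
move=> j; have [p cp] := cPhi j; exists p.
move/cvg_epsP: cp => cp; apply/cvg_epsP => e e0.
have [N HN] := cp e e0; exists (maxn N j) => n.
rewrite geq_max => /andP [Nn jn].
have [chi [ichi echi]] := tail n j jn.
rewrite /= echi; apply: HN; apply: leq_trans Nn _; exact: incr_ge.
Qed.


Lemma closed_approx (K : set Y) (y : Y) : closed K ->
  (forall e : R, 0 < e -> exists xi, K xi /\ mdist y xi < e) -> K y.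
Proof.
move=> cK ap; apply: cK => B /metricType_numDomainType.nbhs_mdistP [e /= e0 He].
by have [xi [Kxi dxi]] := ap e e0; exists xi; split => //; apply: He.
Qed.

Lemma compact_closedY (K : set Y) : compact K -> closed K.
Proof. by move=> cK; apply: compact_closed => //; apply: metric_hausdorff. Qed.

Lemma cvg_in_closed (K : set Y) (z : nat -> Y) p : closed K ->
  (forall e : R, 0 < e -> exists N, forall n, (N <= n)%N -> exists xi, K xi /\ mdist (z n) xi < e) ->
  z @ \oo --> p -> K p.
Proof.
move=> cK ap /cvg_epsP cz; apply: closed_approx => // e e0.
have e20 : 0 < e / 2 by rewrite divr_gt0.
have [N1 H1] := ap _ e20; have [N2 H2] := cz _ e20.
have [xi [Kxi dxi]] := H1 (maxn N1 N2) (leq_maxl _ _).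
exists xi; split => //; apply: le_lt_trans (metric_triangle _ (z (maxn N1 N2)) _) _.
by rewrite [e]splitr ltrD //; apply: H2; apply: leq_maxr.
Qed.

Lemma compact_bdd (K : set Y) : compact K ->
  exists r : R, forall x y, K x -> K y -> mdist x y <= r.
Proof.
move=> cK; apply: contrapT => nb.
have nb' : forall r : R, exists x y, K x /\ K y /\ r < mdist x y.
  move=> r; apply: contrapT => h; apply: nb; exists r => x y Kx Ky.
  by rewrite leNgt; apply/negP => rl; apply: h; exists x, y.
have [x0 [_ [Kx0 _]]] := nb' 0.
have : forall n : nat, exists q, K q /\ n%:R < mdist x0 q.
  move=> n; have [a [b [Ka [Kb ab]]]] := nb' (n%:R *+ 2).
  case: (leP (mdist x0 a) n%:R) => ha.
    exists b; split => //; rewrite ltNge; apply/negP => hb.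
    move: ab; rewrite ltNge => /negP; apply.
    apply: le_trans (metric_triangle _ x0 _) _; rewrite mulr2n lerD //.
    by rewrite metric_sym.
  by exists a.
move=> /boolp.choice [q Hq].
have [p [Kp fp]] := @compact_freq K _ cK (fun n => proj1 (Hq n)).
have [n [Nn dn]] := fp 1 ltr01 (Num.truncn (mdist x0 p + 1)).+1.
have := proj2 (Hq n); rewrite ltNge => /negP; apply.
apply: le_trans (metric_triangle _ p _) _.
apply: ltW; apply: (@lt_trans _ _ (mdist x0 p + 1)); first by rewrite ltrD2l.
by apply: lt_le_trans (truncnS_gt _) _; rewrite ler_nat.
Qed.

End Gen.
Arguments freq {R Y}. Arguments inv_small {R}. Arguments cvg_epsP {R Y}.
Arguments extract {R Y}. Arguments compact_freq {R Y}. Arguments approach_freq {R Y}.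
Arguments diag {R Y}. Arguments closed_approx {R Y}. Arguments compact_closedY {R Y}.
Arguments cvg_in_closed {R Y}. Arguments compact_bdd {R Y}.

Set Implicit Arguments. Unset Strict Implicit.

Lemma attract_pt (R : realType) (X Sigma : metricType R) (U : Sigma -> R -> R -> X -> X)
  (K C : set X) : unif_attracting U K -> mbounded C ->
  forall e : R, 0 < e -> exists L : R, forall sigma t tau x, L <= t - tau -> C x ->
    exists xi, K xi /\ mdist (U sigma t tau x) xi < e.
Proof.
move=> UA bC e e0.
have e20 : 0 < e / 2 by rewrite divr_gt0.
have [L HL] := UA C bC _ e20; exists L => sigma t tau x Lt Cx.
have H1 := HL t tau Lt.
have H2 : (hdelta (U sigma t tau @` C) K <= (e / 2)%:E)%E.
  by apply: le_trans H1; apply: ereal_sup_ubound; exists sigma.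
have H3 : (ereal_inf [set (mdist (U sigma t tau x) xi)%:E | xi in K] < e%:E)%E.
  apply: le_lt_trans (le_trans _ H2) _; first by apply: ereal_sup_ubound; exists (U sigma t tau x) => //; exists x.
  by rewrite lte_fin ltr_pdivrMr // ltr_pMr // ltr1n.
have [_ [xi Kxi <-]] := ereal_inf_lt H3; rewrite lte_fin => d.
by exists xi.
Qed.

Lemma attract_of_pt (R : realType) (X Sigma : metricType R) (U : Sigma -> R -> R -> X -> X)
  (K : set X) : (forall C : set X, mbounded C ->
  forall e : R, 0 < e -> exists L : R, forall sigma t tau x, L <= t - tau -> C x ->
    exists xi, K xi /\ mdist (U sigma t tau x) xi < e) -> unif_attracting U K.
Proof.
move=> H C bC e e0; have [L HL] := H C bC e e0; exists L => t tau Lt.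
apply: ge_ereal_sup => _ [sigma _ <-].
apply: ge_ereal_sup => _ [_ [x Cx <-] <-].
have [xi [Kxi dxi]] := HL sigma t tau x Lt Cx.
apply: ereal_inf_le; exists (mdist (U sigma t tau x) xi)%:E; first by exists xi.
by rewrite lee_fin ltW.
Qed.


Lemma shift0 (R : realType) (X Sigma : metricType R)
  (T : R -> Sigma -> Sigma) (U : Sigma -> R -> R -> X -> X) :
  (forall s : R, 0 <= s -> T s @` [set: Sigma] = [set: Sigma]) ->
  (forall (sigma : Sigma) (s t tau : R), 0 <= s -> tau <= t ->
     U sigma (s + t) (s + tau) = U (T s sigma) t tau) ->
  forall sigma t s, s <= t -> exists rho, U sigma t s = U rho (t - s) 0.
Proof.
move=> surj sh sigma t s st.
case: (leP 0 s) => s0.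
  exists (T s sigma); rewrite -sh //; last by rewrite subr_ge0.
  by rewrite addr0 addrC subrK.
have : [set: Sigma] sigma by [].
rewrite -(surj (- s)); last by rewrite oppr_ge0 ltW.
case=> rho _ <-; exists rho; rewrite -sh //; last by rewrite oppr_ge0 ltW.
  by rewrite addNr addrC.
Qed.

Lemma bdd_nbhd (R : realType) (X : metricType R) (A : set X) : compact A ->
  mbounded [set x | exists xi, A xi /\ mdist x xi < 1].
Proof.
move=> cA; have [r Hr] := compact_bdd _ cA; exists (1 + r + 1).
move=> x x' [xi [Axi dx]] [xi' [Axi' dx']].
apply: le_trans (metric_triangle _ xi _) _.
rewrite -addrA; apply: lerD; first exact: ltW.
apply: le_trans (metric_triangle _ xi' _) _.
by apply: lerD; [exact: Hr | rewrite metric_sym; exact: ltW].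
Qed.

Lemma compact_mbdd (R : realType) (X : metricType R) (A : set X) : compact A -> mbounded A.
Proof. by move=> cA; have [r Hr] := compact_bdd _ cA; exists r. Qed.

Lemma closed_ge (R : realType) (X : metricType R) (y : X) (c : R) :
  closed [set z | c <= mdist z y].
Proof.
move=> p clp /=; rewrite leNgt; apply/negP => lt.
have d0 : 0 < c - mdist p y by rewrite subr_gt0.
have [w [/= cw pw]] := clp [set w | mdist p w < c - mdist p y]
  ltac:(by apply/metricType_numDomainType.nbhs_mdistP; exists (c - mdist p y)).
have := metric_triangle w p y; rewrite metric_sym in pw.
lra.
Qed.


Lemma lmaxl (R : realType) (a b : R) : a <= Num.max a b.
Proof. by rewrite le_max lexx. Qed.
Lemma lmaxr (R : realType) (a b : R) : b <= Num.max a b.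
Proof. by rewrite le_max lexx orbT. Qed.
Lemma lminl (R : realType) (a b : R) : Num.min a b <= a.
Proof. by rewrite ge_min lexx. Qed.
Lemma lminr (R : realType) (a b : R) : Num.min a b <= b.
Proof. by rewrite ge_min lexx orbT. Qed.

Lemma approx (R : realType) (X Sigma : metricType R)
  (T : R -> Sigma -> Sigma) (U : Sigma -> R -> R -> X -> X) (A : set X) :
  (forall s : R, 0 <= s -> T s @` [set: Sigma] = [set: Sigma]) ->
  (forall sigma : Sigma, is_process (U sigma)) ->
  (forall (sigma : Sigma) (s t tau : R), 0 <= s -> tau <= t ->
     U sigma (s + t) (s + tau) = U (T s sigma) t tau) ->
  is_unif_global_attractor U A ->
  forall y, A y -> forall eps : R, 0 < eps -> forall L0 : R,
  exists sigma x t, (exists xi, A xi /\ mdist x xi < 1) /\ L0 <= t /\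
     mdist (U sigma t 0 x) y < eps.
Proof.
move=> surj proc sh [cA attrA minA] y Ay eps eps0 L0.
set B := [set x | exists xi, A xi /\ mdist x xi < 1].
have bB : mbounded B by apply: bdd_nbhd.
apply: contrapT => hn.
have hn' : forall sigma x t, B x -> L0 <= t -> eps <= mdist (U sigma t 0 x) y.
  move=> sigma x t Bx Lt; rewrite leNgt; apply/negP => lt; apply: hn.
  by exists sigma, x, t.
set A' := A `&` [set z | eps / 2 <= mdist z y].
have cA' : compact A' by apply: compact_closedI => //; apply: closed_ge.
have attrA' : unif_attracting U A'.
  apply: attract_of_pt => C bC e e0.
  have e'0 : 0 < Num.min e (eps / 2) by rewrite lt_min e0 divr_gt0.
  have [LC HLC] := attract_pt attrA bC ltr01.
  have [LB HLB] := attract_pt attrA bB e'0.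
  exists (Num.max LC 0 + Num.max (Num.max LB L0) 0) => sigma t tau x Lt Cx.
  have h1 := lmaxl LC 0; have h2 := lmaxr LC 0.
  have h3 := lmaxl (Num.max LB L0) 0; have h4 := lmaxr (Num.max LB L0) 0.
  have h5 := lmaxl LB L0; have h6 := lmaxr LB L0.
  have h7 := lminl e (eps / 2); have h8 := lminr e (eps / 2).
  set s := tau + Num.max LC 0.
  have taus : tau <= s by rewrite /s; lra.
  have st : s <= t by rewrite /s; lra.
  have -> : U sigma t tau x = U sigma t s (U sigma s tau x).
    by rewrite ((proc sigma).2 t s tau st taus).
  have Bx' : B (U sigma s tau x) by apply: HLC => //; rewrite /s; lra.
  have [rho erho] := shift0 surj sh sigma st.
  have hz := hn' rho _ (t - s) Bx' ltac:(rewrite /s; lra).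
  rewrite -erho in hz.
  have [xi [Axi dxi]] := HLB sigma t s _ ltac:(rewrite /s; lra) Bx'.
  exists xi; split; last by lra.
  split => //=.
  have := metric_triangle (U sigma t s (U sigma s tau x)) xi y; lra.
have := minA _ cA' attrA' y Ay; rewrite /A' /= mdistxx; lra.
Qed.


Lemma exists_mult (R : realType) (H : R) : 0 < H -> forall r : R, exists m : nat, r <= m%:R * H.
Proof.
move=> H0 r; exists (Num.truncn (r / H)).+1.
rewrite -ler_pdivrMr //; apply: ltW; exact: truncnS_gt.
Qed.

Lemma trajectory (R : realType) (X Sigma : metricType R)
  (T : R -> Sigma -> Sigma) (U : Sigma -> R -> R -> X -> X) (A : set X)
  (H : R) (rho : nat -> Sigma) (xi : nat -> X) :
  is_semigroup T ->
  (forall sigma : Sigma, is_process (U sigma)) ->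
  (forall (sigma : Sigma) (s t tau : R), 0 <= s -> tau <= t ->
     U sigma (s + t) (s + tau) = U (T s sigma) t tau) ->
  compact A -> unif_attracting U A ->
  0 < H ->
  (forall m, T H (rho m.+1) = rho m) ->
  (forall m, U (rho m.+1) H 0 (xi m.+1) = xi m) ->
  (forall m, A (xi m)) ->
  kernel_section U (rho 0%N) 0 (xi 0%N).
Proof.
move=> [T0 TD] proc sh cA attrA H0 Trho Uxi Axi.
pose G m s := U (rho m) (s + m%:R * H) 0 (xi m).
have Gstep : forall m s, 0 <= s + m%:R * H -> G m s = G m.+1 s.
  move=> m s hs; rewrite /G.
  rewrite ((proc (rho m.+1)).2 (s + m.+1%:R * H) H 0); last 2 first.
  - by rewrite mulrSr; lra.
  - exact: ltW.
  rewrite /= Uxi -Trho -sh ?(ltW H0) //.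
  have -> : s + m.+1%:R * H = H + (s + m%:R * H) by rewrite mulrSr; ring.
  by rewrite addr0.
have Gle : forall k d s, 0 <= s + k%:R * H -> G k s = G (k + d)%N s.
  move=> k d s hs; elim: d => [|d IH]; first by rewrite addn0.
  rewrite IH addnS Gstep //; apply: le_trans hs _.
  rewrite lerD2l ler_wpM2r ?ler_nat ?leq_addr //; exact: ltW.
have Gany : forall m m' s, 0 <= s + m%:R * H -> 0 <= s + m'%:R * H -> G m s = G m' s.
  move=> m m' s h h'; case: (leqP m m') => mm.
    by rewrite (Gle m (m' - m)%N) // subnKC.
  by rewrite (Gle m' (m - m')%N) // subnKC // ltnW.
have Mex := exists_mult H0.
pose M s := projT1 (cid (Mex (- s))).
have HM : forall s, 0 <= s + (M s)%:R * H.
  by move=> s; have := projT2 (cid (Mex (- s))); rewrite -/(M s); lra.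
have rhoT : forall m, T (m%:R * H) (rho m) = rho 0%N.
  elim=> [|m IH]; first by rewrite mul0r T0.
  by rewrite mulrSr mulrDl mul1r TD ?mulr_ge0 ?ler0n ?ltW //= Trho.
exists (fun s => G (M s) s); last first.
  have -> : G (M 0) 0 = G 0%N 0 by apply: Gany; [exact: HM | rewrite mul0r addr0].
  by rewrite /G mul0r addr0 (proc _).1.
rewrite /complete_bdd_traj; split.
  have [L HL] := attract_pt attrA (compact_mbdd cA) ltr01.
  have hB : forall s, exists z, A z /\ mdist (G (M s) s) z < 1.
    move=> s; have [m0 Hm0] := Mex (L - s).
    have hm : 0 <= s + (maxn (M s) m0)%:R * H.
      apply: le_trans (HM s) _; rewrite lerD2l ler_wpM2r ?ler_nat ?leq_maxl //; exact: ltW.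
    rewrite (Gany _ (maxn (M s) m0) s) ?HM //.
    apply: HL => //; rewrite subr0.
    have : m0%:R * H <= (maxn (M s) m0)%:R * H.
      by rewrite ler_wpM2r ?ler_nat ?leq_maxr //; exact: ltW.
    lra.
  have [r Hr] := bdd_nbhd cA.
  rewrite /mbounded; exists r => _ _ [a _ <-] [b _ <-]; apply: Hr; [exact: hB | exact: hB].
move=> s tau ts.
set m := maxn (M s) (M tau).
have hs : 0 <= s + m%:R * H.
  apply: le_trans (HM s) _; rewrite lerD2l ler_wpM2r ?ler_nat ?leq_maxl //; exact: ltW.
have ht : 0 <= tau + m%:R * H.
  apply: le_trans (HM tau) _; rewrite lerD2l ler_wpM2r ?ler_nat ?leq_maxr //; exact: ltW.
rewrite (Gany _ m s) ?HM // (Gany _ m tau) ?HM //.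
rewrite -(rhoT m) -sh //; last by rewrite mulr_ge0 ?ler0n ?ltW.
rewrite /G [tau + _]addrC [s + _]addrC.
rewrite ((proc (rho m)).2 (m%:R * H + s) (m%:R * H + tau) 0) //.
- by rewrite lerD2l.
- by rewrite addrC.
Qed.


Lemma cvg_sub (R : realType) (Y : metricType R) (z : nat -> Y) (p : Y) psi :
  incr psi -> z @ \oo --> p -> (z \o psi) @ \oo --> p.
Proof.
move=> ipsi /cvg_epsP cz; apply/cvg_epsP => e e0.
have [N HN] := cz e e0; exists N => n Nn; apply: HN.
by apply: leq_trans Nn _; apply: incr_ge.
Qed.

Lemma cvg_ev (R : realType) (Y : metricType R) (z w : nat -> Y) (p : Y) :
  (exists N, forall n, (N <= n)%N -> z n = w n) -> z @ \oo --> p -> w @ \oo --> p.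
Proof.
move=> [N1 H1] /cvg_epsP cz; apply/cvg_epsP => e e0.
have [N HN] := cz e e0; exists (maxn N N1) => n.
rewrite geq_max => /andP [a b]; rewrite -H1 //; exact: HN.
Qed.

Lemma lim_uniq (R : realType) (Y : metricType R) (z : nat -> Y) (p p' : Y) :
  z @ \oo --> p -> z @ \oo --> p' -> p = p'.
Proof.
move=> /cvg_epsP c1 /cvg_epsP c2; apply: mdist_positivity.
apply/eqP; rewrite eq_le mdist_ge0 andbT; apply/ler_addgt0Pr => e e0.
have e20 : 0 < e / 2 by rewrite divr_gt0.
have [N1 H1] := c1 _ e20; have [N2 H2] := c2 _ e20.
have := H1 (maxn N1 N2) (leq_maxl _ _); have := H2 (maxn N1 N2) (leq_maxr _ _).
have := metric_triangle p (z (maxn N1 N2)) p'; rewrite [mdist p' _]metric_sym.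
rewrite add0r; lra.
Qed.


Lemma construct (R : realType) (X Sigma : metricType R)
  (T : R -> Sigma -> Sigma) (U : Sigma -> R -> R -> X -> X)
  (I : set nat) (h : nat -> R) (A : set X) :
  compact [set: Sigma] ->
  is_semigroup T ->
  (forall s : R, 0 <= s -> T s @` [set: Sigma] = [set: Sigma]) ->
  (forall sigma : Sigma, is_process (U sigma)) ->
  (forall (sigma : Sigma) (s t tau : R), 0 <= s -> tau <= t ->
     U sigma (s + t) (s + tau) = U (T s sigma) t tau) ->
  is_unif_global_attractor U A ->
  admissible_seq I h ->
  asymp_closed U I h ->
  (forall k, I k -> continuous (T (h k))) ->
  forall y, A y -> exists sigma, kernel_section U sigma 0 y.
Proof.
move=> cS sg surj proc sh GA [hI [h0 hinc]] aC cT y Ay.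
have [cA attrA minA] := GA.
have [T0 TD] := sg.
have I1 : I 1%N by case: hI => [[N [N2 ->]]|->] //=.
have Idown : forall k, I k.+1 -> I k.
  by case: hI => [[N [N2 ->]]|->] //= k; apply: ltnW.
have hge0 : forall k, I k -> 0 <= h k.
  elim=> [|k IH] Ik; first by rewrite h0.
  by apply: le_trans (ltW (hinc k Ik)); apply: IH; apply: Idown.
have H0 : 0 < h 1%N by have := hinc 0%N I1; rewrite h0.
set H := h 1%N in H0 *.
set B := [set x | exists xi, A xi /\ mdist x xi < 1].
have bB : mbounded B by apply: bdd_nbhd.
have : forall n : nat, exists stx : Sigma * X * R,
    B stx.1.2 /\ n%:R <= stx.2 /\ mdist (U stx.1.1 stx.2 0 stx.1.2) y < (n.+1%:R)^-1.
  move=> n; have [s [x [t [Bx [nt d]]]]] := approx surj proc sh GA Ay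
    (ltac:(by rewrite invr_gt0 ltr0Sn) : 0 < (n.+1%:R : R)^-1) n%:R.
  by exists (s, x, t).
move=> /boolp.choice [g Hg].
pose sg' n := (g n).1.1; pose xg n := (g n).1.2; pose tg n := (g n).2.
have Bxg : forall n, B (xg n) by move=> n; have [] := Hg n.
have tge : forall n, n%:R <= tg n by move=> n; have [_ []] := Hg n.
have cvy : (fun n => U (sg' n) (tg n) 0 (xg n)) @ \oo --> y.
  apply/cvg_epsP => e e0; have [N HN] := inv_small _ e0; exists N => n Nn.
  rewrite metric_sym; apply: lt_trans (HN n Nn); by have [_ []] := Hg n.
have appr : forall psi, incr psi -> forall (m k : nat) (e : R), 0 < e ->
    exists N, forall n, (N <= n)%N -> exists xi, A xi /\
      mdist (U (sg' (psi n)) (tg (psi n) - m%:R * H + h k) 0 (xg (psi n))) xi < e.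
  move=> psi ipsi m k e e0.
  have [L HL] := attract_pt attrA bB e0.
  have [N HN] := exists_mult ltr01 (L + m%:R * H - h k).
  exists N => n Nn; apply: HL => //.
  have : N%:R <= (psi n)%:R :> R by rewrite ler_nat; exact: leq_trans Nn (incr_ge _ ipsi n).
  have := tge (psi n); rewrite mulr1 in HN; lra.
pose Fs (m n : nat) := T (tg n - m%:R * H) (sg' n).
have hyp1 : forall j psi, incr psi -> exists p, freq p (Fs j \o psi).
  move=> j psi _.
  have [p [_ fp]] := compact_freq setT (fun n => Fs j (psi n)) cS (fun n => Logic.I).
  by exists p.
have [phi1 [iphi1 lim1]] := diag Fs hyp1.
have /boolp.choice [pi Hpi] := lim1.
pose Fp (j n : nat) := match (unpickle j : option (nat * nat)) with
  | Some mk => U (sg' (phi1 n)) (tg (phi1 n) - mk.1%:R * H + h mk.2) 0 (xg (phi1 n))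
  | None => y end.
have hyp2 : forall j psi, incr psi -> exists p, freq p (Fp j \o psi).
  move=> j psi ipsi; rewrite /Fp /comp.
  case: (unpickle j : option (nat * nat)) => [[m k]|] /=.
    have [p [_ fp]] := approach_freq A _ cA (appr _ (incr_comp _ _ iphi1 ipsi) m k).
    by exists p.
  by exists y => e e0 N; exists N; split => //; rewrite mdistxx.
have [phi2 [iphi2 lim2]] := diag Fp hyp2.
have /boolp.choice [q' Hq'] := lim2.
pose phi := phi1 \o phi2.
have iphi : incr phi by apply: incr_comp.
pose q (m k : nat) := q' (pickle (m, k)).
have P1 : forall m, (fun n => T (tg (phi n) - m%:R * H) (sg' (phi n))) @ \oo --> pi m.
  by move=> m; apply: (cvg_sub iphi2 (Hpi m)).
have P2 : forall m k, (fun n => U (sg' (phi n)) (tg (phi n) - m%:R * H + h k) 0 (xg (phi n))) @ \oo --> q m k.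
  move=> m k; have := Hq' (pickle (m, k)).
  by rewrite /Fp /comp pickleK.
have P0 : (fun n => U (sg' (phi n)) (tg (phi n)) 0 (xg (phi n))) @ \oo --> y.
  exact: (cvg_sub iphi cvy).
have P3 : forall n, n%:R <= tg (phi n).
  move=> n; apply: le_trans (tge _); rewrite ler_nat; exact: incr_ge.
have R1 : q 0%N 0%N = y.
  apply: (lim_uniq (P2 0%N 0%N)); apply: cvg_ev P0.
  by exists 0%N => n _; rewrite mul0r subr0 h0 addr0.
have R2 : forall m, q m.+1 1%N = q m 0%N.
  move=> m; apply: (lim_uniq (P2 m.+1 1%N)); apply: cvg_ev (P2 m 0%N).
  exists 0%N => n _.
  have -> : tg (phi n) - m%:R * H + h 0%N = tg (phi n) - m.+1%:R * H + h 1%N.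
    by rewrite h0 -/H mulrSr; ring.
  by [].
have evN : forall m : nat, exists N : nat, forall n, (N <= n)%N -> 0 <= tg (phi n) - m%:R * H.
  move=> m; have [N HN] := exists_mult ltr01 (m%:R * H); exists N => n Nn.
  have : N%:R <= n%:R :> R by rewrite ler_nat.
  have := P3 n; rewrite mulr1 in HN; lra.
have R3 : forall m, T H (pi m.+1) = pi m.
  move=> m.
  have c : (T H \o (fun n => T (tg (phi n) - m.+1%:R * H) (sg' (phi n)))) @ \oo --> T H (pi m.+1).
    by apply: continuous_cvg; [exact: (cT 1%N I1 (pi m.+1)) | exact: P1].
  apply: esym; apply: (lim_uniq (P1 m)); apply: cvg_ev c.
  have [N HN] := evN m.+1; exists N => n Nn.
  have e := congr1 (fun f => f (sg' (phi n))) (TD H (tg (phi n) - m.+1%:R * H) (ltW H0) (HN n Nn)).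
  rewrite /= in e; rewrite /= -e.
  have -> : H + (tg (phi n) - m.+1%:R * H) = tg (phi n) - m%:R * H by rewrite mulrSr; ring.
  by [].
have R4 : forall m, U (pi m.+1) H 0 (q m.+1 0%N) = q m 0%N.
  move=> m; rewrite -(R2 m).
  have hA := aC _ (pi m.+1) (fun n => U (sg' (phi n)) (tg (phi n) - m.+1%:R * H) 0 (xg (phi n))) (q m.+1) (P1 m.+1).
  apply: hA I1.
  move=> k Ik; apply: cvg_ev (P2 m.+1 k).
  have [N HN] := evN m.+1; exists N => n Nn.
  have a0 := HN n Nn.
  rewrite -sh ?hge0 // ?addr0.
  rewrite ((proc (sg' (phi n))).2 (tg (phi n) - m.+1%:R * H + h k) (tg (phi n) - m.+1%:R * H) 0) //.
  by rewrite lerDl hge0.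
have R5 : forall m, A (q m 0%N).
  move=> m; exact: (cvg_in_closed A _ _ (compact_closedY A cA) (appr phi iphi m 0%N) (P2 m 0%N)).
have := @trajectory _ _ _ T U A H pi (fun m => q m 0%N) sg proc sh cA attrA H0 R3 R4 R5.
by rewrite /= R1 => kt; exists (pi 0%N).
Qed.

Unset Implicit Arguments.

Theorem theorem6p6 (R : realType) (X Sigma : metricType R)
  (T : R -> Sigma -> Sigma) (U : Sigma -> R -> R -> X -> X)
  (I : set nat) (h : nat -> R) (A : set X) :
  compact [set: Sigma] ->
  is_semigroup T ->
  (forall s : R, 0 <= s -> T s @` [set: Sigma] = [set: Sigma]) ->
  (forall sigma : Sigma, is_process (U sigma)) ->
  (forall (sigma : Sigma) (s t tau : R), 0 <= s -> tau <= t ->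
     U sigma (s + t) (s + tau) = U (T s sigma) t tau) ->
  unif_asymp_compact U ->
  is_unif_global_attractor U A ->
  admissible_seq I h ->
  asymp_closed U I h ->
  (forall k, I k -> continuous (T (h k))) ->
  A = \bigcup_(sigma in [set: Sigma]) kernel_section U sigma 0.
Proof.
move=> cS sg surj proc sh _ GA adm aC cT.
apply/seteqP; split => y.
  move=> Ay; have [sigma ks] := construct cS sg surj proc sh GA adm aC cT Ay.
  by exists sigma.
case=> sigma _ [x [bx tr] <-].
have [cA attrA _] := GA.
apply: (closed_approx A _ (compact_closedY A cA)) => e e0.
have [L HL] := attract_pt attrA bx e0.
have hL : L <= 0 - - Num.max L 0 by rewrite sub0r opprK le_max lexx.
have := HL sigma 0 (- Num.max L 0) (x (- Num.max L 0)) hL (ltac:(by exists (- Num.max L 0))).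
by rewrite -tr // oppr_le0 le_max lexx orbT.
Qed.
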